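(* Let $l:\mathbb{Z}^2\to\mathcal{L}^4_0$ be a principal contact element net with one family of spherical parameter lines $\{l_{i,j}\}_{i\in\mathbb{Z}}$. Then for any $j_0,j_1\in\mathbb{Z}$ there is a projective transformation $f_{j_0,j_1}:\bigvee_i l_{i,j_0}\to\bigvee_i l_{i,j_1}$ such that $f_{j_0,j_1}(l_{i,j_0})=l_{i,j_1}$ for all $i\in\mathbb{Z}$.
   Context: Let $e_1,\dots,e_6$ be an orthonormal basis of $\mathbb{R}^{4,2}$ with $\langle e_i,e_i\rangle=1$ for $i\le4$ and $\langle e_5,e_5\rangle=\langle e_6,e_6\rangle=-1$. The Lie quadric is $\mathcal{L}^4=\{[x]\in\mathbb{R}\mathrm{P}^5:\langle x,x\rangle=0\}$ and $\mathcal{L}^4_0$ the set of lines contained in $\mathcal{L}^4$. A principal contact element net is a map $l:\mathbb{Z}^2\to\mathcal{L}^4_0$ such that neighbouring lines ($l_{i,j},l_{i+1,j}$ and $l_{i,j},l_{i,j+1}$) intersect. $\bigvee$ denotes projective span. The net has one family of spherical parameter lines $\{l_{i,j}\}_{i\in\mathbb{Z}}$ if for every $j$ the span $\bigvee_i l_{i,j}$ is $4$-dimensional and the planes $\{l_{i,j}\vee l_{i,j+1}\}_{i\in\mathbb{Z}}$ are concurrent (have a common point). Standing assumption: all data are generic (in general position subject to the stated constraints). *)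

(* Defs.v *)
(* R^{4,2} = row vectors 'rV[R]_6 over a realType R;
   linear subspaces are represented by the row spaces of 6x6 matrices (mxalgebra). *)
From HB Require Import structures.
From mathcomp Require Import all_boot all_order all_algebra.
From mathcomp Require Import reals.
Set Implicit Arguments. Unset Strict Implicit. Unset Printing Implicit Defensive.
Import Order.TTheory GRing.Theory Num.Theory.
Local Open Scope ring_scope.

Section LieGeometry.
Variable R : realType.

Definition lie_gram : 'M[R]_6 :=
  diag_mx (\row_(k < 6) (if (k < 4)%N then 1 else -1)).

(* A projective line of RP^5 (= 2-dim linear subspace, the row space of A)
   contained in the Lie quadric, i.e. totally isotropic. *)
Definition lie_line (A : 'M[R]_6) : Prop :=
  \rank A = 2%N /\ A *m lie_gram *m A^T = 0.

Definition meet_nontrivially (A B : 'M[R]_6) : Prop := (0 < \rank (A :&: B)%MS)%N.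

Definition contact_element_net (l : int -> int -> 'M[R]_6) : Prop :=
  (forall i j, lie_line (l i j)) /\
  (forall i j, meet_nontrivially (l i j) (l (i + 1) j)) /\
  (forall i j, meet_nontrivially (l i j) (l i (j + 1))).

Definition is_span (L : int -> 'M[R]_6) (S : 'M[R]_6) : Prop :=
  (forall i, (L i <= S)%MS) /\
  (forall T : 'M[R]_6, (forall i, (L i <= T)%MS) -> (S <= T)%MS).

Definition common_point (l : int -> int -> 'M[R]_6) (j : int) (p : 'rV[R]_6) : Prop :=
  p != 0 /\ forall i, (p <= l i j + l i (j + 1)%R)%MS.

Definition spherical_family (l : int -> int -> 'M[R]_6) : Prop :=
  (forall j, exists S, is_span (fun i => l i j) S /\ \rank S = 5%N) /\
  (forall j, exists p, common_point l j p).

(* Genericity (standing assumption): the point of concurrency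
   of the planes l_{i,j} \/ l_{i,j+1} can be chosen off the spans
   \bigvee_i l_{i,j} and \bigvee_i l_{i,j+1}. *)
Definition generic_concurrency (l : int -> int -> 'M[R]_6) : Prop :=
  forall j, exists p, common_point l j p /\
    (forall S, is_span (fun i => l i j) S -> ~~ (p <= S)%MS) /\
    (forall S, is_span (fun i => l i (j + 1)) S -> ~~ (p <= S)%MS).

(* f is (a linear map inducing) a projective transformation from the
   projective subspace S0 onto S1 (a linear isomorphism S0 -> S1). *)
Definition proj_transf_between (F S0 S1 : 'M[R]_6) : Prop :=
  (S0 *m F == S1)%MS /\ \rank (S0 *m F) = \rank S0.

End LieGeometry.

(* Main.v *)
Require Import Defs.
From HB Require Import structures.
From mathcomp Require Import all_boot all_order all_algebra.
From mathcomp Require Import reals.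
From mathcomp Require Import zify.
Import Order.TTheory GRing.Theory Num.Theory.
Local Open Scope ring_scope.

Section Aux.
Variable R : realType.

Lemma rank6 m (H : 'M[R]_6) (X : 'M[R]_(m,6)) :
  ~~ (X <= H)%MS -> \rank H = 5%N -> \rank (H + X)%MS = 6%N.
Proof.
move=> nXH rH.
have lt : (H < H + X)%MS.
  rewrite ltmxE addsmxSl /=; apply: contra nXH => h.
  exact: submx_trans (addsmxSr H X) h.
move: lt; rewrite ltmxErank => /andP[_ lt].
have := rank_leq_col (H + X)%MS; rewrite rH in lt; lia.
Qed.

Lemma hyper m (A : 'M[R]_(m,6)) (H : 'M[R]_6) (p : 'rV[R]_6) :
  (p <= A)%MS -> ~~ (p <= H)%MS -> \rank H = 5%N ->
  ((\rank (A :&: H)%MS).+1 <= \rank A)%N.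
Proof.
move=> pA pH rH.
have nAH : ~~ (A <= H)%MS.
  by apply: contra pH => h; exact: submx_trans pA h.
have r6 := @rank6 _ H A nAH rH.
have := mxrank_sum_cap H A; rewrite capmxC r6 rH; lia.
Qed.

Lemma step (A B : int -> 'M[R]_6) (SA SB : 'M[R]_6) (p : 'rV[R]_6) :
  \rank SA = 5%N -> \rank SB = 5%N ->
  (forall i, A i <= SA)%MS -> (forall i, B i <= SB)%MS ->
  ~~ (p <= SA)%MS -> ~~ (p <= SB)%MS ->
  (forall i, p <= A i + B i)%MS ->
  (forall i, \rank (A i) = 2%N) -> (forall i, \rank (B i) = 2%N) ->
  (forall i, 0 < \rank (A i :&: B i))%N ->
  exists F : 'M[R]_6, forall i, (A i *m F == B i)%MS.
Proof.
move=> rSA rSB sA sB pA pB pAB rA rB cAB.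
exists (proj_mx SB <<p>>%MS) => i.
set X := A i *m _.
have full : (A i <= SB + <<p>>)%MS.
  apply: submx_full; rewrite /row_full.
  by rewrite (@rank6 _ SB <<p>>%MS _ rSB) // genmxE.
have XSB : (X <= SB)%MS by exact: proj_mx_sub.
have AX : (A i - X <= p)%MS.
  by rewrite -(genmxE p); exact: proj_mx_compl_sub.
have XP : (X <= A i + B i)%MS.
  have -> : X = A i - (A i - X) by rewrite opprB addrC subrK.
  apply: addmx_sub; first exact: addsmxSl.
  by rewrite eqmx_opp; exact: submx_trans AX (pAB i).
have h1 := @hyper _ _ SB p (pAB i) pB rSB.
have h2 := mxrank_sum_cap (A i) (B i).
have c := cAB i; move: h2; rewrite rA rB => h2.
have BP : (B i <= (A i + B i) :&: SB)%MS by rewrite sub_capmx addsmxSr sB.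
have eBP : (B i == (A i + B i) :&: SB)%MS.
  have [_ <-] := mxrank_leqif_eq BP.
  rewrite eqn_leq mxrankS // rB; lia.
have XB : (X <= B i)%MS.
  move/andP: eBP => [_ h]; apply: submx_trans h.
  by rewrite sub_capmx XP XSB.
have AQ : (A i <= X + p)%MS.
  have -> : A i = X + (A i - X) by rewrite addrC subrK.
  apply: addmx_sub; first exact: addsmxSl.
  exact: submx_trans AX (addsmxSr X p).
have AQS : (A i <= (X + p) :&: SA)%MS by rewrite sub_capmx AQ sA.
have h3 := @hyper _ _ SA p (addsmxSr X p) pA rSA.
have h4 := mxrankS AQS.
have h5 := mxrank_adds_leqif X p.
have h6 := rank_leq_row p.
have [_ <-] := mxrank_leqif_eq XB.
rewrite eqn_leq mxrankS // rB.
move: h4 h3 h6; rewrite rA.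
case: h5 => h5 _; lia.
Qed.

End Aux.

Theorem proposition5p5 (R : realType) (l : int -> int -> 'M[R]_6) :
  contact_element_net l ->
  spherical_family l ->
  generic_concurrency l ->
  forall (j0 j1 : int) (S0 S1 : 'M[R]_6),
    is_span (fun i => l i j0) S0 ->
    is_span (fun i => l i j1) S1 ->
    exists F : 'M[R]_6,
      proj_transf_between F S0 S1 /\
      (forall i : int, (l i j0 *m F == l i j1)%MS).
Proof.
move=> [lines [_ meets]] [sph _] gen.
have spanrank : forall j S, is_span (fun i => l i j) S -> \rank S = 5%N.
  move=> j S [h1 h2]; have [S' [[h1' h2'] r']] := sph j.
  transitivity (\rank S'); last exact: r'.
  apply/eqP; rewrite eqn_leq (mxrankS (h2 _ h1')) (mxrankS (h2' _ h1)).
  by [].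
pose P j j' := exists F : 'M[R]_6, forall i, (l i j *m F == l i j')%MS.
have trans : forall a b c, P a b -> P b c -> P a c.
  move=> a b c [F hF] [G hG]; exists (F *m G) => i.
  move/andP: (hF i) => [f1 f2]; move/andP: (hG i) => [g1 g2].
  rewrite mulmxA; apply/andP; split.
    exact: submx_trans (submxMr G f1) g1.
  exact: submx_trans g2 (submxMr G f2).
have stp : forall j, P j (j + 1) /\ P (j + 1) j.
  move=> j.
  have [p [[_ pl] [pS pS1]]] := gen j.
  have [Sj [spj rj]] := sph j.
  have [Sj1 [spj1 rj1]] := sph (j + 1).
  have rl : forall i j, \rank (l i j) = 2%N by move=> i j'; case: (lines i j').
  split.
    apply: (@step R (fun i => l i j) (fun i => l i (j + 1)) Sj Sj1 p rj rj1 (spj.1) (spj1.1) (pS _ spj) (pS1 _ spj1)) => //.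
    by move=> i; exact: meets.
  apply: (@step R (fun i => l i (j + 1)) (fun i => l i j) Sj1 Sj p rj1 rj (spj1.1) (spj.1) (pS1 _ spj1) (pS _ spj)) => //.
  - by move=> i; rewrite addsmxC.
  - by move=> i; rewrite capmxC; exact: meets.
have ind : forall n : nat, forall j, P j (j + n%:Z) /\ P (j + n%:Z) j.
  elim=> [|n IH] j.
    rewrite addr0; split; exists 1%:M => i; by rewrite mulmx1 submx_refl.
  have -> : j + (n.+1)%:Z = (j + n%:Z) + 1 by rewrite -addn1 PoszD addrA.
  have [a b] := IH j; have [c d] := stp (j + n%:Z).
  split; [exact: trans a c | exact: trans d b].
move=> j0 j1 S0 S1 sp0 sp1.
have PF : P j0 j1.
  case E: (j1 - j0) => [n|n].
    have -> : j1 = j0 + n%:Z by move: E; lia.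
    exact: (ind n j0).1.
  have -> : j0 = j1 + (n.+1)%:Z by move: E; rewrite NegzE; lia.
  exact: (ind n.+1 j1).2.
have [F hF] := PF.
exists F; split => //.
have r0 := spanrank _ _ sp0; have r1 := spanrank _ _ sp1.
have S1F : (S1 <= S0 *m F)%MS.
  apply: sp1.2 => i; move/andP: (hF i) => [_ h]; apply: submx_trans h _.
  exact: submxMr (sp0.1 i).
have rF : (\rank (S0 *m F) <= 5)%N.
  by apply: leq_trans (mxrankM_maxl S0 F) _; rewrite r0.
have rF' : \rank (S0 *m F) = 5%N.
  apply/eqP; rewrite eqn_leq rF /=.
  by apply: leq_trans (mxrankS S1F); rewrite r1.
split; last by rewrite rF' r0.
have [_ e] := mxrank_leqif_eq S1F.
move: e; rewrite rF' r1 eqxx => /esym e.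
by move/andP: e => [a b]; rewrite /= a b.
Qed.
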